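(* Let $\mathbb{F}$ be a field and let $(\mathbb{F}(\alpha,\beta),\sigma)$ be a bivariate difference field extension of $\mathbb{F}$ with $\sigma|_{\mathbb{F}}=\mathrm{id}$, $\sigma(\alpha)=\beta$, $\sigma(\beta)=u\alpha+v\beta$ ($u\in\mathbb{F}\setminus\{0\}$, $v\in\mathbb{F}$). Let $A=\begin{pmatrix}0&u\\1&v\end{pmatrix}$ and assume that $A$ has two distinct eigenvalues $\lambda_1\neq\lambda_2$ in $\mathbb{F}$ such that $\lambda_1/\lambda_2$ is not a root of unity. Let $p,q\in\mathbb{F}[\alpha,\beta]$ be nonzero homogeneous polynomials such that $g=\frac{p}{q}$ is semi-invariant. Then there exists an integer $i$ with $-\deg q\le i\le \deg p$ such that $$\frac{\sigma g}{g}=\lambda_1^{\,i}\,\lambda_2^{\,\deg p-\deg q-i}.$$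
   Context: A bivariate difference field extension $(\mathbb{F}(\alpha,\beta),\sigma)$ of a difference field $(\mathbb{F},\sigma)$ is the rational function field $\mathbb{F}(\alpha,\beta)$ in two algebraically independent transcendental elements $\alpha,\beta$ over $\mathbb{F}$, together with an automorphism $\sigma$ of $\mathbb{F}(\alpha,\beta)$ extending $\sigma$ on $\mathbb{F}$ and satisfying $\sigma(\alpha)=\beta$, $\sigma(\beta)=u\alpha+v\beta$ with $v\in\mathbb{F}$, $u\in\mathbb{F}\setminus\{0\}$. $\deg$ denotes total degree in $\alpha,\beta$; a polynomial is homogeneous if all its monomials have the same total degree. An element $a\in\mathbb{F}(\alpha,\beta)$ is called semi-invariant if $\sigma a=ca$ for some $c\in\mathbb{F}\setminus\{0\}$. *)

(* Defs.v *)
From HB Require Import structures.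
From mathcomp Require Import all_boot all_order all_algebra.
From mathcomp Require Import fraction.
From mathcomp.multinomials Require Import mpoly.
Set Implicit Arguments. Unset Strict Implicit. Unset Printing Implicit Defensive.
Import Order.TTheory GRing.Theory Num.Theory.
Local Open Scope ring_scope.

Definition alpha (F : fieldType) : {mpoly F[2]} := 'X_(0 : 'I_2).
Definition beta (F : fieldType) : {mpoly F[2]} := 'X_(1 : 'I_2).

Definition sigmaP (F : fieldType) (u v : F) (p : {mpoly F[2]}) : {mpoly F[2]} :=
  p \mPo [tuple beta F; u *: alpha F + v *: beta F].

Definition ratfun (F : fieldType) := {fraction {mpoly F[2]}}.

Definition ratf (F : fieldType) (p q : {mpoly F[2]}) : ratfun F :=
  FracField.tofrac p / FracField.tofrac q.

(* sigma (p/q) = sigma(p)/sigma(q), the unique extension of sigma to the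
   fraction field. *)
Definition sigma_ratf (F : fieldType) (u v : F) (p q : {mpoly F[2]}) : ratfun F :=
  ratf (sigmaP u v p) (sigmaP u v q).

Definition constf (F : fieldType) (c : F) : ratfun F := FracField.tofrac (c%:MP).

Definition tdeg (F : fieldType) (p : {mpoly F[2]}) : nat := (msize p).-1.

Definition Amat (F : fieldType) (u v : F) : 'M[F]_2 :=
  \matrix_(i < 2, j < 2)
    (if (i : nat) == 0%N then (if (j : nat) == 0%N then 0 else u)
     else (if (j : nat) == 0%N then 1 else v)).

Definition is_root_of_unity (F : fieldType) (a : F) : Prop :=
  exists2 n : nat, (0 < n)%N & a ^+ n = 1.

(* Main.v *)
Require Import Defs.
From HB Require Import structures.
From mathcomp Require Import all_boot all_order all_algebra.
From mathcomp Require Import fraction.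
From mathcomp.multinomials Require Import mpoly.
From mathcomp Require Import ring zify.
Set Implicit Arguments. Unset Strict Implicit. Unset Printing Implicit Defensive.
Import Order.TTheory GRing.Theory Num.Theory.
Local Open Scope ring_scope.


Lemma comp_mpolyA (R : comRingType) n k l (p : {mpoly R[n]})
  (lq : n.-tuple {mpoly R[k]}) (lr : k.-tuple {mpoly R[l]}) :
  (p \mPo lq) \mPo lr = p \mPo [tuple (tnth lq i) \mPo lr | i < n].
Proof.
rewrite [RHS]comp_mpolyEX (comp_mpolyEX p lq) raddf_sum; apply: eq_bigr => m _.
rewrite /= comp_mpolyZ; congr (_ *: _); rewrite !comp_mpolyX rmorph_prod.
by apply: eq_bigr => i _; rewrite rmorphXn /= tnth_map tnth_ord_tuple.
Qed.

Lemma comp_diag_X (R : comRingType) n (w : 'I_n -> R) (m : 'X_{1..n}) :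
  'X_[m] \mPo [tuple w i *: 'X_i | i < n] = (\prod_(i < n) w i ^+ m i) *: 'X_[m].
Proof.
rewrite comp_mpolyX mpolyXE_id -scaler_prod; apply: eq_bigr => i _.
by rewrite tnth_map tnth_ord_tuple exprZn.
Qed.

Lemma mcoeff_diag (R : comRingType) n (w : 'I_n -> R) (P : {mpoly R[n]}) m :
  (P \mPo [tuple w i *: 'X_i | i < n])@_m = (\prod_(i < n) w i ^+ m i) * P@_m.
Proof.
rewrite comp_mpolyEX {3}(mpolyE P) !raddf_sum /= mulr_sumr; apply: eq_bigr => m' _.
rewrite comp_diag_X !mcoeffZ mcoeffX; case: eqP => [->|_]; last by rewrite !mulr0.
by rewrite !mulr1 mulrC.
Qed.


Section S.
Variable F : fieldType.
Local Notation x := ('X_(0 : 'I_2) : {mpoly F[2]}).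
Local Notation y := ('X_(1 : 'I_2) : {mpoly F[2]}).

Definition Tl (l1 l2 : F) : 2.-tuple {mpoly F[2]} := [tuple x + y; l1 *: x + l2 *: y].
Definition Til (l1 l2 : F) : 2.-tuple {mpoly F[2]} :=
  [tuple (l2 - l1)^-1 *: (l2 *: x - y); (l2 - l1)^-1 *: (y - l1 *: x)].
Definition wd (l1 l2 : F) (i : 'I_2) : F := if (i : nat) == 0%N then l1 else l2.
Definition Dl (l1 l2 : F) : 2.-tuple {mpoly F[2]} := [tuple wd l1 l2 i *: 'X_i | i < 2].

Lemma tuple2_eq (t1 t2 : 2.-tuple {mpoly F[2]}) :
  tnth t1 0 = tnth t2 0 -> tnth t1 1 = tnth t2 1 -> t1 = t2.
Proof.
move=> h0 h1; apply: eq_from_tnth => i; case: i => [[|[|//]]] Hi.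
  by rewrite (_ : Ordinal Hi = 0) //; apply: val_inj.
by rewrite (_ : Ordinal Hi = 1) //; apply: val_inj.
Qed.

Lemma T_inv l1 l2 (p : {mpoly F[2]}) : l1 != l2 -> (p \mPo Tl l1 l2) \mPo Til l1 l2 = p.
Proof.
move=> hl; rewrite comp_mpolyA -[RHS]comp_mpoly_id; congr (_ \mPo _).
have hk : l2 - l1 != 0 by rewrite subr_eq0 eq_sym.
have kE : ((l2 - l1)^-1)%:MP * (l2%:MP - l1%:MP) = 1 :> {mpoly F[2]}.
  by rewrite -rmorphB -rmorphM mulVf.
apply: tuple2_eq; rewrite !tnth_map !tnth_ord_tuple /=.
  rewrite comp_mpolyD !comp_mpolyXU /= -!mul_mpolyC.
  transitivity (((l2 - l1)^-1)%:MP * (l2%:MP - l1%:MP) * x); first by ring.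
  by rewrite kE mul1r.
rewrite comp_mpolyD !comp_mpolyZ !comp_mpolyXU /= -!mul_mpolyC.
transitivity (((l2 - l1)^-1)%:MP * (l2%:MP - l1%:MP) * y); first by ring.
by rewrite kE mul1r.
Qed.

Lemma XDl l1 l2 (i : 'I_2) : 'X_i \mPo Dl l1 l2 = wd l1 l2 i *: 'X_i.
Proof. by rewrite comp_mpolyXU -(tnth_nth 0) tnth_map tnth_ord_tuple. Qed.

Lemma T_sigma (u v l1 l2 : F) (p : {mpoly F[2]}) :
  l1 * l1 = u + v * l1 -> l2 * l2 = u + v * l2 ->
  (sigmaP u v p) \mPo Tl l1 l2 = (p \mPo Tl l1 l2) \mPo Dl l1 l2.
Proof.
move=> h1 h2; rewrite /sigmaP !comp_mpolyA; congr (_ \mPo _).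
apply: tuple2_eq; rewrite !tnth_map !tnth_ord_tuple !(tnth_nth 0) /= /alpha /beta.
  rewrite ?comp_mpolyD ?comp_mpolyZ ?XDl ?comp_mpolyXU /= /wd /=.
  by [].
rewrite ?comp_mpolyD ?comp_mpolyZ ?XDl ?comp_mpolyXU /= /wd /= !scalerA h1 h2.
rewrite -!mul_mpolyC !rmorphD !rmorphM /=. ring.
Qed.

Lemma X1homog (i : 'I_2) : ('X_i : {mpoly F[2]}) \is 1.-homog.
Proof. by rewrite dhomogX; apply/eqP; exact: mdeg1. Qed.

Lemma T_homog l1 l2 (p : {mpoly F[2]}) d :
  p \is d.-homog -> p \mPo Tl l1 l2 \is d.-homog.
Proof.
move=> hp; rewrite comp_mpolyE big_seq; apply: rpred_sum => m hm; apply: rpredZ.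
have -> : d = (\sum_i m i)%N by rewrite -(dhomog_mf hp hm); exact: mdegE.
apply: (big_ind2 (fun (P : {mpoly F[2]}) (e : nat) => P \is e.-homog)).
- exact: dhomog1.
- by move=> ? ? ? ? ? ?; apply: dhomogM.
move=> i _; rewrite -[X in X.-homog]mul1n; apply: dhomogMn.
case: i => [[|[|//]]] Hi; rewrite (tnth_nth 0) /=.
  by apply: dhomogD; apply: X1homog.
by apply: dhomogD; apply: dhomogZ; apply: X1homog.
Qed.

Lemma eig_eq (u v l : F) : eigenvalue (Amat u v) l -> l * l = u + v * l.
Proof.
case/eigenvalueP => w hw hw0.
have e0 := congr1 (fun M : 'rV[F]_2 => M 0 0) hw.
have e1 := congr1 (fun M : 'rV[F]_2 => M 0 1) hw.
move: e0 e1; rewrite /= !mxE !big_ord_recr !big_ord0 /= !mxE /= => e0 e1. rewrite add0r in e0. rewrite add0r in e1.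
have E0 : widen_ord (leqnSn 1) ord_max = 0 :> 'I_2 by apply: val_inj.
have E1 : ord_max = 1 :> 'I_2 by apply: val_inj.
rewrite E0 E1 mulr0 add0r mulr1 in e0; rewrite E0 E1 in e1.
have w0 : w 0 0 != 0.
  apply/eqP => h; move/eqP: hw0; apply; apply/rowP => j; rewrite mxE.
  case: j => [[|[|//]]] Hj.
    by rewrite (_ : Ordinal Hj = 0) //; apply: val_inj.
  rewrite (_ : Ordinal Hj = 1); last by apply: val_inj.
  by rewrite e0 h mulr0.
apply: (mulIf w0); rewrite e0 in e1.
rewrite -mulrA -e1; ring.
Qed.

Lemma mdeg2 (m : 'X_{1..2}) : mdeg m = addn (m 0) (m 1).
Proof. by rewrite mdegE !big_ord_recr big_ord0 /= add0n; congr (m _ + m _); apply: val_inj. Qed.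

Lemma W2 l1 l2 (m : 'X_{1..2}) :
  \prod_(i < 2) wd l1 l2 i ^+ m i = l1 ^+ m 0 * l2 ^+ m 1.
Proof.
by rewrite !big_ord_recr big_ord0 /= mul1r /wd /=; congr (_ ^+ m _ * _ ^+ m _); apply: val_inj.
Qed.
End S.


Lemma final_step (F : fieldType) (l1 l2 c : F) (a b a' b' dp dq : nat) :
  l1 != 0 -> l2 != 0 -> addn a b = dp -> addn a' b' = dq ->
  l1 ^+ a * l2 ^+ b = c * (l1 ^+ a' * l2 ^+ b') ->
  exists i : int, [/\ - dq%:Z <= i, i <= dp%:Z & c = l1 ^ i * l2 ^ (dp%:Z - dq%:Z - i)].
Proof.
move=> l10 l20 dP dQ hW.
have cE : c = (l1 ^+ a * l2 ^+ b) / (l1 ^+ a' * l2 ^+ b').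
  by rewrite hW mulfK // mulf_neq0 // expf_neq0.
exists (a%:Z - a'%:Z); split.
- rewrite -dQ; lia.
- rewrite -dP; lia.
have -> : dp%:Z - dq%:Z - (a%:Z - a'%:Z) = b%:Z - b'%:Z.
  rewrite -dP -dQ; lia.
rewrite !expfzDr // -!exprnN /= cE.
rewrite invfM -[l1 ^ a]/(l1 ^+ a) -[l2 ^ b]/(l2 ^+ b); ring.
Qed.

Import FracField.



Theorem theorem2p2 (F : fieldType) (u v : F) (lambda1 lambda2 : F)
  (p q : {mpoly F[2]}) :
  u != 0 ->
  eigenvalue (Amat u v) lambda1 -> eigenvalue (Amat u v) lambda2 ->
  lambda1 != lambda2 ->
  ~ is_root_of_unity (lambda1 / lambda2) ->
  p != 0 -> q != 0 ->
  p \is homog mdeg -> q \is homog mdeg ->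
  (exists2 c : F, c != 0 & sigma_ratf u v p q = constf c * ratf p q) ->
  exists i : int,
    [/\ - (tdeg q)%:Z <= i, i <= (tdeg p)%:Z &
        sigma_ratf u v p q / ratf p q
        = constf (lambda1 ^ i * lambda2 ^ ((tdeg p)%:Z - (tdeg q)%:Z - i))].
Proof.
move=> u0 e1 e2 l12 _ p0 q0 hp hq [c c0 hs].

have h1 := eig_eq e1; have h2 := eig_eq e2.
have l1n0 : lambda1 != 0.
  by apply: contraNneq u0 => h; move: h1; rewrite h mul0r mulr0 addr0 => <-.
have l2n0 : lambda2 != 0.
  by apply: contraNneq u0 => h; move: h2; rewrite h mul0r mulr0 addr0 => <-.
have Tnz r : r != 0 -> r \mPo Tl lambda1 lambda2 != 0.
  by apply: contraNneq => h; rewrite -(T_inv r l12) h comp_mpoly0.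
have Wn0 (m : 'X_{1..2}) : \prod_(i < 2) wd lambda1 lambda2 i ^+ m i != 0.
  by rewrite W2 mulf_neq0 // expf_neq0.
have cD R m : (R \mPo Dl lambda1 lambda2)@_m = (\prod_(i < 2) wd lambda1 lambda2 i ^+ m i) * R@_m.
  exact: mcoeff_diag.
have DRnz R : R != 0 -> R \mPo Dl lambda1 lambda2 != 0.
  move=> Rn0; apply/eqP => h; move: (cD R (mlead R)); rewrite h mcoeff0.
  move/esym/eqP; rewrite mulf_eq0 (negbTE (Wn0 _)) /= mleadc_eq0.
  by rewrite (negbTE Rn0).
have leadD R : R != 0 -> (mlead (R \mPo Dl lambda1 lambda2) <= mlead R)%O.
  move=> Rn0; apply: msupp_le_mlead; rewrite mcoeff_msupp.
  have := mlead_supp (DRnz R Rn0); rewrite mcoeff_msupp cD mulf_eq0 negb_or.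
  by case/andP.
set P := p \mPo Tl lambda1 lambda2; set Q := q \mPo Tl lambda1 lambda2.
have P0 : P != 0 by exact: Tnz.
have Q0 : Q != 0 by exact: Tnz.
have sq0 : sigmaP u v q != 0.
  apply/eqP => h; have := DRnz Q Q0; rewrite /Q -(T_sigma q h1 h2) h comp_mpoly0.
  by rewrite eqxx.
have E : sigmaP u v p * q = c%:MP * (p * sigmaP u v q).
  apply/eqP; rewrite -tofrac_eq !tofracM; apply/eqP; move: hs.
  rewrite /sigma_ratf /ratf /constf => H.
  have H' : tofrac (sigmaP u v p) = tofrac c%:MP * (tofrac p / tofrac q) * tofrac (sigmaP u v q).
    by rewrite -H mulfVK // tofrac_eq0.
  rewrite H' -!mulrA; congr (_ * _); rewrite [_^-1 * _]mulrC -mulrA mulfV ?mulr1 //.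
  by rewrite tofrac_eq0.
have E' : (P \mPo Dl lambda1 lambda2) * Q = c%:MP * (P * (Q \mPo Dl lambda1 lambda2)).
  have := congr1 (comp_mpoly (Tl lambda1 lambda2)) E.
  by rewrite !rmorphM /= comp_mpolyC !(T_sigma _ h1 h2).
have := congr1 (mcoeff (mlead P + mlead Q)%MM) E'.
rewrite mcoeffCM (mleadcMW (leadD P P0) (lexx _)) (mleadcMW (lexx _) (leadD Q Q0)).
rewrite !cD !W2 => hW.
have hom r : r \is homog mdeg -> r != 0 ->
    addn (mlead (r \mPo Tl lambda1 lambda2) 0) (mlead (r \mPo Tl lambda1 lambda2) 1) = tdeg r.
  move=> hr r0; rewrite -mdeg2.
  have hrd : r \is (tdeg r).-homog by move: hr; rewrite homog_msize.
  exact: (dhomog_mf (T_homog lambda1 lambda2 hrd) (mlead_supp (Tnz r r0))).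
have dP := hom p hp p0; have dQ := hom q hq q0.
rewrite -/P in dP; rewrite -/Q in dQ.
have lP0 : mleadc P != 0 by rewrite mleadc_eq0.
have lQ0 : mleadc Q != 0 by rewrite mleadc_eq0.
set a := mlead P 0 in hW dP; set b := mlead P 1 in hW dP.
set a' := mlead Q 0 in hW dQ; set b' := mlead Q 1 in hW dQ.
have hW' : lambda1 ^+ a * lambda2 ^+ b = c * (lambda1 ^+ a' * lambda2 ^+ b').
  move: (lambda1 ^+ a * lambda2 ^+ b) (lambda1 ^+ a' * lambda2 ^+ b') hW => X Y.
  move: (mleadc P) (mleadc Q) lP0 lQ0 => lp lq lp0 lq0 hX.
  apply: (mulIf (mulf_neq0 lp0 lq0)).
  by rewrite mulrA hX -!mulrA; congr (_ * _); exact: mulrCA.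
have [i [hi1 hi2 hc]] := final_step l1n0 l2n0 dP dQ hW'.
exists i; split => //.
have rn0 : ratf p q != 0.
  by rewrite /ratf mulf_neq0 ?invr_eq0 ?tofrac_eq0.
by rewrite hs mulfK // hc.
Qed.
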